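(* Let $\mathcal Z$ be a finite zero-set, $k\ge0$ an integer, and $A\subseteq\mathbb Z_+^2$. If $A$ spans for $\mathcal Z$, then $A_{>k}$ spans for $\mathcal Z^{\swarrow k}$.
   Context: $\mathbb Z_+=\{0,1,2,\dots\}$; a zero-set is a union of rectangles $([0,a-1]\times[0,b-1])\cap\mathbb Z_+^2$. $\mathrm{row}(x,A)$ (resp. $\mathrm{col}(x,A)$) is the number of points of $A$ on the horizontal (resp. vertical) line through $x$; $\mathcal T(A)=A\cup\{x\notin A:(\mathrm{row}(x,A),\mathrm{col}(x,A))\notin\mathcal Z\}$; $A$ spans for $\mathcal Z$ if $\bigcup_t\mathcal T^t(A)=\mathbb Z_+^2$. $A_{>k}=\{x\in A:\mathrm{row}(x,A)>k\text{ or }\mathrm{col}(x,A)>k\}$. $\mathcal Z^{\swarrow k}=\{(u-k,v-k):(u,v)\in\mathcal Z,u\ge k,v\ge k\}$. *)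

(* Defs.v *)
From mathcomp Require Import all_boot.
Set Implicit Arguments. Unset Strict Implicit. Unset Printing Implicit Defensive.

Definition pt := (nat * nat)%type.
Definition pset := pt -> Prop.

(* Z is a zero-set: a union of rectangles ([0,a-1] x [0,b-1]) of Z_+^2. *)
Definition is_zero_set (Z : pset) : Prop :=
  exists R : pt -> Prop,
    forall p : pt, Z p <-> exists a b, R (a, b) /\ p.1 < a /\ p.2 < b.

Definition finite_set (Z : pset) : Prop :=
  exists s : seq pt, forall p, Z p -> p \in s.

Definition card_eq (P : pset) (n : nat) : Prop :=
  exists s : seq pt, [/\ uniq s, (forall y, y \in s <-> P y) & size s = n].

Definition row_set (x : pt) (A : pset) : pset := fun y => y.2 = x.2 /\ A y.
Definition col_set (x : pt) (A : pset) : pset := fun y => y.1 = x.1 /\ A y.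

(* (row(x,A), col(x,A)) is in Z; an infinite count is never in Z (Z ⊆ Z_+^2). *)
Definition rc_in (Z : pset) (x : pt) (A : pset) : Prop :=
  exists r c, [/\ card_eq (row_set x A) r, card_eq (col_set x A) c & Z (r, c)].

Definition T_op (Z : pset) (A : pset) : pset :=
  fun x => A x \/ (~ A x /\ ~ rc_in Z x A).

Fixpoint T_iter (Z : pset) (t : nat) (A : pset) : pset :=
  match t with 0 => A | t'.+1 => T_op Z (T_iter Z t' A) end.

Definition spans (Z : pset) (A : pset) : Prop :=
  forall x : pt, exists t, T_iter Z t A x.

(* "count > k", with infinite counts counted as > k *)
Definition card_gt (P : pset) (k : nat) : Prop :=
  ~ exists n, card_eq P n /\ n <= k.

Definition A_gt (A : pset) (k : nat) : pset :=
  fun x => A x /\ (card_gt (row_set x A) k \/ card_gt (col_set x A) k).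

Definition Z_shift (Z : pset) (k : nat) : pset :=
  fun p => exists u v, [/\ Z (u, v), k <= u, k <= v & p = (u - k, v - k)].

(* Main.v *)
From Stdlib Require Import Classical.
Require Import Defs.
From mathcomp Require Import all_boot zify.

Set Implicit Arguments. Unset Strict Implicit. Unset Printing Implicit Defensive.

Lemma maxlist (P : pset) M :
  (forall l : seq pt, uniq l -> (forall y, y \in l -> P y) -> size l < M) ->
  exists l : seq pt, uniq l /\ (forall y, y \in l <-> P y).
Proof.
move=> H.
suff: forall d (l : seq pt), uniq l -> (forall y, y \in l -> P y) -> M - size l <= d ->
  exists l, uniq l /\ (forall y, y \in l <-> P y).
  by move/(_ M [::]); apply => //; rewrite subn0.
elim=> [|d IH] l ul sl hd.
  by have := H l ul sl; lia.
case: (classic (forall y, P y -> y \in l)) => [hall|].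
  by exists l; split => // y; split; [apply: sl | apply: hall].
move/not_all_ex_not => [y hy]; have [Py nyl] := imply_to_and _ _ hy.
apply: (IH (y :: l)).
- by rewrite /= ul andbT; apply/negP.
- by move=> z; rewrite inE => /orP [/eqP -> //|]; apply: sl.
- have := H l ul sl; rewrite /=; lia.
Qed.

Lemma card_le (P : pset) n (l : seq pt) :
  card_eq P n -> uniq l -> (forall y, y \in l -> P y) -> size l <= n.
Proof.
move=> [s [us hs <-]] ul sl; apply: uniq_leq_size => // y /sl /hs //.
Qed.

Definition atmost (P : pset) n := exists s : seq pt, size s <= n /\ forall y, P y -> y \in s.

Lemma atmost_card (P : pset) n : atmost P n -> exists m, card_eq P m /\ m <= n.
Proof.
move=> [s [hs hP]].
have [l [ul hl]] : exists l : seq pt, uniq l /\ (forall y, y \in l <-> P y).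
  apply: (@maxlist P n.+1) => l ul sl.
  exact: leq_trans (uniq_leq_size ul (fun y yl => hP y (sl y yl))) hs.
exists (size l); split; first by exists l.
exact: leq_trans (uniq_leq_size ul (fun y yl => hP y (proj1 (hl y) yl))) hs.
Qed.

Lemma card_atmost (P : pset) n : card_eq P n -> atmost P n.
Proof. by move=> [s [_ hs <-]]; exists s; split => // y /hs. Qed.

Lemma atmost_union (P Q R : pset) a b :
  atmost P a -> atmost Q b -> (forall y, R y -> P y \/ Q y) -> atmost R (a + b).
Proof.
move=> [s1 [h1 p1]] [s2 [h2 p2]] hR; exists (s1 ++ s2); split.
  by rewrite size_cat; lia.
by move=> y /hR [/p1|/p2] hy; rewrite mem_cat hy ?orbT.
Qed.

Lemma card_ext (P Q : pset) n : (forall y, P y <-> Q y) -> card_eq P n -> card_eq Q n.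
Proof.
move=> e [s [us hs sz]]; exists s; split => // y; rewrite hs; apply: e.
Qed.

Lemma rc_ext Z x (A B : pset) :
  (forall y, row_set x A y <-> row_set x B y) ->
  (forall y, col_set x A y <-> col_set x B y) -> rc_in Z x A -> rc_in Z x B.
Proof.
move=> er ec [r [c [hr hc hz]]]; exists r, c; split => //.
- exact: card_ext hr.
- exact: card_ext hc.
Qed.

Lemma T_op_sub Z (A : pset) y : A y -> T_op Z A y.
Proof. by left. Qed.

Lemma T_mono Z (B : pset) s s' y : s <= s' -> T_iter Z s B y -> T_iter Z s' B y.
Proof.
move=> /subnK <-; elim: (s' - s) => [//|d IH] h /=.
by apply: T_op_sub; apply: IH.
Qed.

Lemma list_max Z (B : pset) (l : seq pt) :
  (forall y, y \in l -> exists s, T_iter Z s B y) ->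
  exists s0, forall y, y \in l -> T_iter Z s0 B y.
Proof.
elim: l => [|a l IH] h; first by exists 0.
have [s1 h1] := h a (mem_head _ _).
have [s2 h2] := IH (fun y yl => h y (mem_behead (s:=a :: l) yl)).
exists (maxn s1 s2) => y; rewrite inE => /orP [/eqP ->|yl].
  by apply: T_mono h1; apply: leq_maxl.
by apply: T_mono (h2 _ yl); apply: leq_maxr.
Qed.

Definition Cl Z (B : pset) : pset := fun y => exists s, T_iter Z s B y.

Lemma closure Z (B : pset) M x :
  (forall p, Z p -> p.1 < M /\ p.2 < M) ->
  ~ rc_in Z x (Cl Z B) -> Cl Z B x.
Proof.
move=> hM hn.
case: (classic (exists s, ~ rc_in Z x (T_iter Z s B))) => [[s hs]|hall].
  exists s.+1 => /=; case: (classic (T_iter Z s B x)) => h; [by left | by right].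
exfalso; apply: hn.
have hall' : forall s, rc_in Z x (T_iter Z s B).
  by move=> s; apply: NNPP => h; apply: hall; exists s.
have bnd : forall (sel : pt -> pset -> pset),
   (forall s, exists n, card_eq (sel x (T_iter Z s B)) n /\ n < M) ->
   (forall s y, sel x (T_iter Z s B) y <-> (sel x (fun _ => True) y /\ T_iter Z s B y)) ->
   (forall y, sel x (Cl Z B) y <-> (sel x (fun _ => True) y /\ Cl Z B y)) ->
   exists l : seq pt, uniq l /\ (forall y, y \in l <-> sel x (Cl Z B) y).
  move=> sel hc es ec; apply: (@maxlist _ M) => l ul sl.
  have [s0 hs0] : exists s0, forall y, y \in l -> T_iter Z s0 B y.
    by apply: list_max => y /sl /ec [_].
  have [n [hn' ltn]] := hc s0.
  have := card_le hn' ul (fun y yl => proj2 (es s0 y) (conj (proj1 (proj1 (ec y) (sl y yl))) (hs0 y yl))).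
  lia.
have [lr [ulr hlr]] : exists l : seq pt, uniq l /\ (forall y, y \in l <-> row_set x (Cl Z B) y).
  apply: (bnd row_set) => [s|s y|y]; last 2 first.
  - by rewrite /row_set; split => [[h1 h2]|[[h1 _] h2]]; do ?split.
  - by rewrite /row_set; split => [[h1 h2]|[[h1 _] h2]]; do ?split.
  have [r [c [hr hc hz]]] := hall' s; exists r; split => //; exact: (proj1 (hM _ hz)).
have [lc [ulc hlc]] : exists l : seq pt, uniq l /\ (forall y, y \in l <-> col_set x (Cl Z B) y).
  apply: (bnd col_set) => [s|s y|y]; last 2 first.
  - by rewrite /col_set; split => [[h1 h2]|[[h1 _] h2]]; do ?split.
  - by rewrite /col_set; split => [[h1 h2]|[[h1 _] h2]]; do ?split.
  have [r [c [hr hc hz]]] := hall' s; exists c; split => //; exact: (proj2 (hM _ hz)).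
have [s0 hs0] : exists s0, forall y, y \in lr ++ lc -> T_iter Z s0 B y.
  apply: list_max => y; rewrite mem_cat => /orP [/hlr [_ h]|/hlc [_ h]] //.
apply: (rc_ext _ _ (hall' s0)) => y; split.
- by move=> [h1 h2]; split => //; exists s0.
- by move=> hy; split; [case: hy|apply: hs0; rewrite mem_cat (proj2 (hlr y) hy)].
- by move=> [h1 h2]; split => //; exists s0.
- by move=> hy; split; [case: hy|apply: hs0; rewrite mem_cat (proj2 (hlc y) hy) orbT].
Qed.

Lemma bound_of_finite (Z : pset) : finite_set Z -> exists M, forall p, Z p -> p.1 < M /\ p.2 < M.
Proof.
move=> [s hs]; exists (foldr (fun p m => maxn (maxn p.1 p.2).+1 m) 0 s) => p /hs.
elim: s {hs} => [//|a s IH]; rewrite inE => /orP [/eqP ->|/IH] /=; lia.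
Qed.

Theorem mainTheorem12 (Z : pset) (k : nat) (A : pset) :
  is_zero_set Z -> finite_set Z ->
  spans Z A -> spans (Z_shift Z k) (A_gt A k).
Proof.
move=> [R hR] /bound_of_finite [M hM] hsp.
set Z' := Z_shift Z k.
set B := A_gt A k.
set C := Cl Z' B.
have hM' : forall p, Z' p -> p.1 < M /\ p.2 < M.
  move=> p [u [v [huv _ _ ->]]]; have := hM _ huv => /=; lia.
have down : forall u v r c, Z (u, v) -> r <= u -> c <= v -> Z (r, c).
  move=> u v r c /hR [a [b [ab [/= ua vb]]]] ru cv; apply/hR; exists a, b; split => //=; lia.
set D : pset := fun y => A y /\ ~ B y.
have Drow : forall x, atmost (row_set x D) k.
  move=> x; case: (classic (exists y, row_set x D y)) => [[y [ey [Ay nBy]]]|ne].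
    have nr : ~ card_gt (row_set y A) k by move=> h; apply: nBy; split => //; left.
    have [n [hn nk]] := NNPP _ nr.
    have [s [hs1 hs2]] := card_atmost hn.
    exists s; split; first lia.
    by move=> z [ez [Az _]]; apply: hs2; split => //; rewrite ez.
  by exists [::]; split => // z hz; exfalso; apply: ne; exists z.
have Dcol : forall x, atmost (col_set x D) k.
  move=> x; case: (classic (exists y, col_set x D y)) => [[y [ey [Ay nBy]]]|ne].
    have nr : ~ card_gt (col_set y A) k by move=> h; apply: nBy; split => //; right.
    have [n [hn nk]] := NNPP _ nr.
    have [s [hs1 hs2]] := card_atmost hn.
    exists s; split; first lia.
    by move=> z [ez [Az _]]; apply: hs2; split => //; rewrite ez.
  by exists [::]; split => // z hz; exfalso; apply: ne; exists z.
have step : forall (Q : pset) x, (forall y, Q y -> C y \/ D y) ->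
    rc_in Z' x C -> rc_in Z x Q.
  move=> Q x hQ [r [c [hr hc [u [v [huv ku kv [er ec]]]]]]].
  have [m1 [hm1 le1]] : exists m, card_eq (row_set x Q) m /\ m <= r + k.
    apply: atmost_card; apply: (atmost_union (card_atmost hr) (Drow x)).
    by move=> y [ey /hQ [h|h]]; [left|right].
  have [m2 [hm2 le2]] : exists m, card_eq (col_set x Q) m /\ m <= c + k.
    apply: atmost_card; apply: (atmost_union (card_atmost hc) (Dcol x)).
    by move=> y [ey /hQ [h|h]]; [left|right].
  exists m1, m2; split => //; apply: (down u v) => //; lia.
have main : forall t y, T_iter Z t A y -> C y \/ D y.
  elim=> [|t IH] y /=.
    move=> Ay; case: (classic (B y)) => hB; [left; exists 0 => // | by right].
  move=> [/IH //|[nA nrc]]; left.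
  apply: (closure hM') => h; apply: nrc; exact: (step _ _ IH h).
move=> x; have [t /main [//|Dx]] := hsp x.
apply: (closure hM') => -[r [c [hr hc hz]]].
have hrM := proj1 (hM' _ hz).
have [s [hs1 hs2]] : atmost (fun y : pt => y.2 = x.2) (r + k).
  apply: (atmost_union (card_atmost hr) (Drow x)) => y ey.
  have [t' /main [h|h]] := hsp y; [left|right]; by split.
have hu : uniq [seq (i, x.2) | i <- iota 0 (r + k).+1].
  by rewrite map_inj_uniq ?iota_uniq // => i j [].
have hsub : {subset [seq (i, x.2) | i <- iota 0 (r + k).+1] <= s}.
  by move=> z /mapP [i _ ->]; apply: hs2.
have := leq_trans (uniq_leq_size hu hsub) hs1.
by rewrite size_map size_iota ltnn.
Qed.
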